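(* Let $n\geq 1$ and let $C$ be an all-ones CRC in $G_n$ with covering radius $\rho\geq 2$, $c_1=1$ and $c_2=2$. Then there is a CRC $D$ in $H(2n,2)$ with the same parameter matrix such that $C=\{x\in\mathbb{Z}^n:(\tau(x_1\bmod 4),\ldots,\tau(x_n\bmod 4))\in D\}$.
   Context: $G_n$: vertex set $\mathbb{Z}^n$, $x\sim y$ iff $\sum_i|x_i-y_i|=1$. $H(2n,2)$: binary Hamming graph on $\{0,1\}^{2n}$. For a code $C$ with covering radius $\rho$, $C_i=\{v:d(v,C)=i\}$; $C$ is a CRC if for all $i,j$ every vertex of $C_i$ has the same number $\alpha_{ij}$ of neighbours in $C_j$, with $\alpha_{ij}=0$ for $|i-j|>1$; $a_i=\alpha_{ii}$, $c_i=\alpha_{i,i-1}$; parameter matrix $(\alpha_{ij})$. $C$ is all-ones if $a_i=1$ for all $i$. $\tau$ is the Gray map $\tau(0)=(00),\tau(1)=(10),\tau(2)=(11),\tau(3)=(01)$, applied coordinatewise and concatenated. *)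

(* Defs.v *)
From HB Require Import structures.
From mathcomp Require Import all_boot all_order all_algebra.
From mathcomp Require Import boolp.
Set Implicit Arguments. Unset Strict Implicit. Unset Printing Implicit Defensive.
Import GRing.Theory Num.Theory.

(* ---------- Generic graph notions, graph given by (duplicate-free)
   neighbour lists nbrs : V -> seq V ---------- *)
Section Graph.
Variables (V : eqType) (nbrs : V -> seq V).

Fixpoint walk (k : nat) (x y : V) : Prop :=
  match k with
  | 0 => x = y
  | k'.+1 => exists2 z, z \in nbrs x & walk k' z y
  end.

Definition distC (C : V -> Prop) (v : V) (i : nat) : Prop :=
  (exists c, C c /\ walk i v c) /\
  (forall j, (j < i)%N -> forall c, C c -> ~ walk j v c).

Definition covRadius (C : V -> Prop) (rho : nat) : Prop :=
  (forall v, exists2 i, (i <= rho)%N & distC C v i) /\ (exists v, distC C v rho).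

Definition nbrsIn (C : V -> Prop) (v : V) (j : nat) : nat :=
  count (fun w => `[< distC C w j >]) (nbrs v).

Definition isCRC (C : V -> Prop) (rho : nat) (alpha : nat -> nat -> nat) : Prop :=
  [/\ covRadius C rho,
      (forall i j v, (i <= rho)%N -> (j <= rho)%N -> distC C v i ->
         nbrsIn C v j = alpha i j)
    & (forall i j, (i <= rho)%N -> (j <= rho)%N -> (j.+1 < i)%N \/ (i.+1 < j)%N ->
         alpha i j = 0)].

End Graph.

(* all-ones: a_i = alpha_{ii} = 1 for all 0 <= i <= rho *)
Definition allOnes (rho : nat) (alpha : nat -> nat -> nat) : Prop :=
  forall i, (i <= rho)%N -> alpha i i = 1%N.

Definition unitv n (i : 'I_n) : {ffun 'I_n -> int} :=
  [ffun k => Posz (nat_of_bool (k == i))].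

(* neighbours of x in G_n: the y with sum_i |x_i - y_i| = 1, i.e. x +- e_i *)
Definition gridNbrs n (x : {ffun 'I_n -> int}) : seq {ffun 'I_n -> int} :=
  [seq [ffun k => (x k + unitv i k)%R] | i <- enum 'I_n] ++
  [seq [ffun k => (x k - unitv i k)%R] | i <- enum 'I_n].

Definition flipAt m (x : {ffun 'I_m -> bool}) (i : 'I_m) : {ffun 'I_m -> bool} :=
  [ffun k => if k == i then ~~ x k else x k].

Definition hamNbrs m (x : {ffun 'I_m -> bool}) : seq {ffun 'I_m -> bool} :=
  [seq flipAt x i | i <- enum 'I_m].

Definition tau (z : int) : bool * bool :=
  match (z %% 4)%Z with
  | Posz 0 => (false, false)
  | Posz 1 => (true, false)
  | Posz 2 => (true, true)
  | _ => (false, true)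
  end.

Lemma half_ord_lt n (j : 'I_(n.*2)) : (j./2 < n)%N.
Proof. by rewrite ltn_half_double. Qed.

Definition half_ord n (j : 'I_(n.*2)) : 'I_n := Ordinal (half_ord_lt j).

(* (tau(x_1 mod 4), ..., tau(x_n mod 4)) in {0,1}^{2n}:
   coordinates 2k, 2k+1 are the two bits of tau(x_k mod 4) *)
Definition gray n (x : {ffun 'I_n -> int}) : {ffun 'I_(n.*2) -> bool} :=
  [ffun j => let p := tau (x (half_ord j)) in if odd j then p.2 else p.1].

(* Main.v *)
Require Import Defs.
From HB Require Import structures.
From mathcomp Require Import all_boot all_order all_algebra.
From mathcomp Require Import boolp ring lra zify.
Set Implicit Arguments. Unset Strict Implicit. Unset Printing Implicit Defensive.
Import GRing.Theory Num.Theory.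
Ltac vec := apply/ffunP => ?; rewrite !ffunE; ring.

Section File1.

Section Dist.
Variables (V : eqType) (nbrs : V -> seq V) (C : V -> Prop) (rho : nat)
  (alpha : nat -> nat -> nat).
Hypothesis nsym : forall v w, w \in nbrs v -> v \in nbrs w.
Hypothesis HC : isCRC nbrs C rho alpha.

Lemma distC_uniq v i j : distC nbrs C v i -> distC nbrs C v j -> i = j.
Proof.
move=> [[c [Cc wi]] mi] [[d [Cd wj]] mj].
case: (ltngtP i j) => // h; [exact: (False_ind _ (mj _ h _ Cc wi))|exact: (False_ind _ (mi _ h _ Cd wj))].
Qed.

Lemma ex_dist v : exists i, `[< distC nbrs C v i >].
Proof. case: HC => [[cov _] _ _]; case: (cov v) => i _ h; exists i; exact/asboolP. Qed.

Definition dd v : nat := xchoose (ex_dist v).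

Lemma dd_spec v : distC nbrs C v (dd v).
Proof. exact/asboolP/(xchooseP (ex_dist v)). Qed.

Lemma dd_eq v i : distC nbrs C v i -> dd v = i.
Proof. move=> h; exact: distC_uniq (dd_spec v) h. Qed.

Lemma dd_le v : (dd v <= rho)%N.
Proof. case: HC => [[cov _] _ _]; case: (cov v) => i hi h; by rewrite (dd_eq h). Qed.

Lemma dd0 v : dd v = 0%N <-> C v.
Proof.
split.
- move=> h; have := dd_spec v; rewrite h => -[[c [Cc /= ->]] _]; exact Cc.
- move=> Cv; apply: dd_eq; split; first by exists v.
  by move=> j.
Qed.

Lemma dd_adj v w : w \in nbrs v -> (dd w <= (dd v).+1)%N.
Proof.
move=> hw; have [[c [Cc wc]] _] := dd_spec v.
have [_ mw] := dd_spec w.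
rewrite leqNgt; apply/negP => h.
apply: (mw _ h c Cc); exists v => //; exact: nsym.
Qed.

Lemma dd_count v j : (j <= rho)%N ->
  count (fun w => dd w == j) (nbrs v) = alpha (dd v) j.
Proof.
move=> hj; case: HC => _ Hn _.
rewrite -(Hn (dd v) j v (dd_le v) hj (dd_spec v)) /nbrsIn.
apply: eq_count => w; apply/eqP/asboolP.
- by move=> <-; exact: dd_spec.
- exact: dd_eq.
Qed.

End Dist.

End File1.

Section File2.
Local Open Scope ring_scope.

Definition vadd n (x u : {ffun 'I_n -> int}) : {ffun 'I_n -> int} := [ffun k => x k + u k].
Definition vneg n (u : {ffun 'I_n -> int}) : {ffun 'I_n -> int} := [ffun k => - u k].
Definition dirs n : seq {ffun 'I_n -> int} :=
  [seq unitv i | i <- enum 'I_n] ++ [seq vneg (unitv i) | i <- enum 'I_n].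


Lemma gridNbrsE n x : gridNbrs x = [seq vadd x u | u <- dirs n].
Proof.
rewrite /gridNbrs /dirs map_cat -!map_comp; congr (_ ++ _); apply: eq_map => i /=;
 apply/ffunP => k; rewrite !ffunE //.
Qed.

Lemma dirsP n u : u \in dirs n -> exists i : 'I_n, u i = 1 \/ u i = -1.
Proof.
rewrite mem_cat => /orP[] /mapP[i _ ->]; exists i; rewrite /vneg !ffunE eqxx; by [left|right].
Qed.

Lemma dirsN n u : u \in dirs n -> vneg u \in dirs n.
Proof.
rewrite /dirs !mem_cat => /orP[] /mapP[i _ ->]; apply/orP; [right|left]; apply/mapP; exists i;
 rewrite ?mem_enum //; apply/ffunP => k; rewrite !ffunE ?opprK //.
Qed.

Lemma vaddK n (x u : {ffun 'I_n -> int}) : vadd (vadd x u) (vneg u) = x.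
Proof. vec. Qed.
Lemma vaddKN n (x u : {ffun 'I_n -> int}) : vadd (vadd x (vneg u)) u = x.
Proof. vec. Qed.
Lemma vnegK n (u : {ffun 'I_n -> int}) : vneg (vneg u) = u.
Proof. vec. Qed.

Lemma vaddI n (x u w : {ffun 'I_n -> int}) : (vadd x u == vadd x w) = (u == w).
Proof.
apply/eqP/eqP => [h|->] //; apply/ffunP => k; move/ffunP: h => /(_ k); rewrite !ffunE; exact: addrI.
Qed.

Lemma vnegI n (u w : {ffun 'I_n -> int}) : (vneg u == vneg w) = (u == w).
Proof.
apply/eqP/eqP => [h|->] //; apply/ffunP => k; move/ffunP: h => /(_ k); rewrite !ffunE; exact: oppr_inj.
Qed.

Lemma dir_neq_neg n u : u \in dirs n -> u != vneg u.
Proof.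
move=> /dirsP[i hi]; apply/eqP => /ffunP /(_ i); rewrite ffunE; case: hi => ->; lia.
Qed.

Lemma grid_mem n x y : y \in gridNbrs x -> exists2 u, u \in dirs n & y = vadd x u.
Proof. by rewrite gridNbrsE => /mapP[u hu ->]; exists u. Qed.

Lemma grid_nb n x u : u \in dirs n -> vadd x u \in gridNbrs x.
Proof. by move=> hu; rewrite gridNbrsE; apply: map_f. Qed.

Lemma grid_sym n (x y : {ffun 'I_n -> int}) : y \in gridNbrs x -> x \in gridNbrs y.
Proof.
move=> /grid_mem[u hu ->]; have := grid_nb (vadd x u) (dirsN hu); by rewrite vaddK.
Qed.

Lemma unitv_inj n : injective (@unitv n).
Proof.
move=> i j /ffunP /(_ i); rewrite !ffunE eqxx; case: eqP => // _ /eqP; lia.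
Qed.

Lemma uniq_dirs n : uniq (dirs n).
Proof.
rewrite cat_uniq; apply/and3P; split.
- rewrite map_inj_uniq ?enum_uniq //; exact: unitv_inj.
- apply/hasPn => u /mapP[i _ ->]; apply/mapP => -[j _] /ffunP /(_ i).
  rewrite !ffunE eqxx; case: eqP => _ /eqP; lia.
- rewrite map_inj_uniq ?enum_uniq // => i j /eqP; rewrite vnegI => /eqP; exact: unitv_inj.
Qed.

Lemma uniq_grid n (x : {ffun 'I_n -> int}) : uniq (gridNbrs x).
Proof.
rewrite gridNbrsE map_inj_uniq ?uniq_dirs // => u w /eqP; rewrite vaddI => /eqP.
done.
Qed.

End File2.

Section File3.


Lemma cnt_lower (T : eqType) (P : pred T) l S : uniq S ->
  (forall y, y \in S -> (y \in l) && P y) -> (size S <= count P l)%N.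
Proof.
move=> uS h; rewrite -size_filter; apply: uniq_leq_size => // y /h /andP[yl Py].
by rewrite mem_filter Py.
Qed.

Lemma cnt_upper (T : eqType) (P : pred T) l S : uniq l ->
  (forall y, y \in l -> P y -> y \in S) -> (count P l <= size S)%N.
Proof.
move=> ul h; rewrite -size_filter; apply: uniq_leq_size; first exact: filter_uniq.
by move=> y; rewrite mem_filter => /andP[Py yl]; apply: h.
Qed.

Local Notation "x +> u" := (vadd x u) (at level 50, left associativity).

Section Local.
Variables (n : nat) (C : {ffun 'I_n -> int} -> Prop) (rho : nat) (alpha : nat -> nat -> nat).
Hypothesis HC : isCRC (@gridNbrs n) C rho alpha.
Hypothesis hrho : (2 <= rho)%N.
Hypotheses (a00 : alpha 0%N 0%N = 1%N) (a10 : alpha 1%N 0%N = 1%N)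
  (a11 : alpha 1%N 1%N = 1%N) (a21 : alpha 2%N 1%N = 2%N).

Local Notation D := (dd HC).

Lemma adj v u : u \in dirs n -> (D (v +> u) <= (D v).+1)%N.
Proof. move=> hu; apply: dd_adj; [exact: grid_sym | exact: grid_nb]. Qed.

Lemma adjR v u : u \in dirs n -> (D v <= (D (v +> u)).+1)%N.
Proof. move=> hu; have := adj (v +> u) (dirsN hu); by rewrite vaddK. Qed.

Lemma cntE v j : (j <= rho)%N ->
  count (fun w => D w == j) (gridNbrs v) = alpha (D v) j.
Proof. exact: dd_count. Qed.

Lemma only1 v j a u : (j <= rho)%N -> alpha (D v) j = 1%N -> a \in dirs n -> D (v +> a) = j ->
  u \in dirs n -> u != a -> D (v +> u) != j.
Proof.
move=> hj ha hda hDa hu hua; apply/eqP => hDu.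
have : (size [:: v +> a; v +> u] <= count (fun w => D w == j) (gridNbrs v))%N.
  apply: cnt_lower; first by rewrite /= inE vaddI eq_sym hua.
  by move=> y; rewrite !inE => /orP[] /eqP ->; rewrite grid_nb ?hDa ?hDu ?eqxx.
by rewrite cntE // ha.
Qed.

Lemma only2 v j a b u : (j <= rho)%N -> alpha (D v) j = 2%N -> a \in dirs n -> b \in dirs n ->
  D (v +> a) = j -> D (v +> b) = j -> a != b ->
  u \in dirs n -> u != a -> u != b -> D (v +> u) != j.
Proof.
move=> hj ha hda hdb hDa hDb hab hu hua hub; apply/eqP => hDu.
have : (size [:: v +> a; v +> b; v +> u] <= count (fun w => D w == j) (gridNbrs v))%N.
  apply: cnt_lower; first by rewrite /= !inE !vaddI negb_or hab eq_sym hua eq_sym hub.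
  by move=> y; rewrite !inE => /or3P[] /eqP ->; rewrite grid_nb ?hDa ?hDb ?hDu ?eqxx.
by rewrite cntE // ha.
Qed.

Lemma must1 v j a : (j <= rho)%N -> alpha (D v) j = 1%N ->
  (forall u, u \in dirs n -> u != a -> D (v +> u) != j) -> D (v +> a) = j.
Proof.
move=> hj ha h; apply/eqP/negPn/negP => hna.
have : (count (fun w => D w == j) (gridNbrs v) <= size ([::] : seq {ffun 'I_n -> int}))%N.
  apply: cnt_upper; first exact: uniq_grid.
  move=> y /grid_mem[u hu ->] /eqP hD; case: (eqVneq u a) => [e|ne].
  - by move: hna; rewrite -e hD eqxx.
  - by move: (h u hu ne); rewrite hD eqxx.
by rewrite cntE // ha.
Qed.

Lemma must2 v j a b : (j <= rho)%N -> alpha (D v) j = 2%N -> D (v +> a) = j ->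
  (forall u, u \in dirs n -> u != a -> u != b -> D (v +> u) != j) -> D (v +> b) = j.
Proof.
move=> hj ha hDa h; apply/eqP/negPn/negP => hnb.
have : (count (fun w => D w == j) (gridNbrs v) <= size [:: v +> a])%N.
  apply: cnt_upper; first exact: uniq_grid.
  move=> y /grid_mem[u hu ->] /eqP hD; case: (eqVneq u a) => [->|ne]; first by rewrite inE.
  case: (eqVneq u b) => [e|ne'].
  - by move: hnb; rewrite -e hD eqxx.
  - by move: (h u hu ne ne'); rewrite hD eqxx.
by rewrite cntE // ha.
Qed.

Lemma vaddAC (x a b : {ffun 'I_n -> int}) : x +> a +> b = x +> b +> a.
Proof. vec. Qed.

Lemma le0r : (0 <= rho)%N. Proof. by []. Qed.
Lemma le1r : (1 <= rho)%N. Proof. exact: leq_trans hrho. Qed.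

Lemma nen a b : a \in dirs n -> b \in dirs n -> a != vneg b -> vneg a != b.
Proof. by move=> _ _; apply: contra => /eqP <-; rewrite vnegK. Qed.

Section Code.
Variables (c e : {ffun 'I_n -> int}).
Hypotheses (hc : D c = 0%N) (hp : D (c +> e) = 0%N) (he : e \in dirs n).

Lemma stA u : u \in dirs n -> u != e -> D (c +> u) = 1%N.
Proof.
move=> hu hue.
have h0 : D (c +> u) != 0%N.
  by apply: (only1 (a := e)); rewrite ?hc ?a00.
have := adj c hu; rewrite hc; lia.
Qed.
End Code.

Lemma stA' c e u : D c = 0%N -> D (c +> e) = 0%N -> e \in dirs n ->
  u \in dirs n -> u != vneg e -> D (c +> e +> u) = 1%N.
Proof.
move=> hc hp he hu hue; apply: (stA (e := vneg e)) => //; last exact: dirsN.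
by rewrite vaddK.
Qed.

Section Code2.
Variables (c e : {ffun 'I_n -> int}).
Hypotheses (hc : D c = 0%N) (hp : D (c +> e) = 0%N) (he : e \in dirs n).
Let hen : e != vneg e := dir_neq_neg he.
Let hne : vneg e != e := ltac:(by rewrite eq_sym).
Let hdn : vneg e \in dirs n := dirsN he.

Lemma stB f u : f \in dirs n -> f != e -> f != vneg e -> u \in dirs n -> u != vneg f -> u != e ->
  D (c +> f +> u) = 2%N.
Proof.
move=> hf hfe hfn hu huf hue.
have Dv := stA hc hp he hf hfe.
have h0 : D (c +> f +> u) != 0%N.
  apply: (only1 (a := vneg f)) => //; [by rewrite Dv| exact: dirsN| by rewrite vaddK].
have h1 : D (c +> f +> u) != 1%N.
  apply: (only1 (a := e)) => //; [exact: le1r|by rewrite Dv|].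
  rewrite vaddAC; exact: stA'.
have := adj (c +> f) hu; rewrite Dv; lia.
Qed.

Lemma stC : D (c +> vneg e +> vneg e) = 1%N.
Proof.
have Dv := stA hc hp he hdn hne.
apply: must1; [exact: le1r|by rewrite Dv|] => u hu hun.
case: (eqVneq u e) => [->|hue]; first by rewrite vaddKN hc.
rewrite vaddAC stB //; by rewrite ?vnegI eq_sym.
Qed.

Lemma stC5 f : f \in dirs n -> f != e -> f != vneg e -> (2 <= D (c +> f +> vneg e +> vneg e))%N.
Proof.
move=> hf hfe hfn.
have hef : vneg e != vneg f by rewrite vnegI eq_sym.
have Dw := stB hf hfe hfn hdn hef hne.
have ha : alpha (D (c +> f +> vneg e)) 1 = 2%N by rewrite Dw.
have h1' : D (c +> f +> vneg e +> vneg f) = 1%N.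
  have -> : c +> f +> vneg e +> vneg f = c +> vneg e by vec.
  exact: (stA hc hp he).
have h2' : D (c +> f +> vneg e +> e) = 1%N by rewrite vaddKN; exact: (stA hc hp he).
have h1 : D (c +> f +> vneg e +> vneg e) != 1%N.
  exact: (only2 le1r ha (dirsN hf) he h1' h2' (nen hf he hfn) hdn hef hne).
have := adjR (c +> f +> vneg e) hdn; rewrite Dw; lia.
Qed.

Lemma stD : D (c +> vneg e +> vneg e +> vneg e) = 0%N.
Proof.
apply: must1; [exact: le0r|by rewrite stC|] => u hu hun.
case: (eqVneq u e) => [->|hue].
  by rewrite vaddKN (stA hc hp he hdn hne).
have -> : c +> vneg e +> vneg e +> u = c +> u +> vneg e +> vneg e by vec.
have := stC5 hu hue hun; lia.
Qed.

Lemma stE : D (c +> vneg e +> vneg e +> vneg e +> vneg e) = 0%N.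
Proof.
apply: must1; [exact: le0r|by rewrite stD|] => u hu hun.
case: (eqVneq u e) => [->|hue]; first by rewrite vaddKN stC.
have := stC5 hu hue hun.
have := adj (c +> vneg e +> vneg e +> vneg e +> u) he.
have -> : c +> vneg e +> vneg e +> vneg e +> u +> e = c +> u +> vneg e +> vneg e by vec.
lia.
Qed.

End Code2.

Section Perp.
Variables (c e f : {ffun 'I_n -> int}).
Hypotheses (hc : D c = 0%N) (hp : D (c +> e) = 0%N) (he : e \in dirs n).
Hypotheses (hf : f \in dirs n) (hfe : f != e) (hfn : f != vneg e).
Let hff : f != vneg f := dir_neq_neg hf.

Lemma stFp u : u \in dirs n -> u != f -> u != vneg f -> (2 <= D (c +> f +> f +> u))%N.
Proof.
move=> hu huf hufn.
case: (eqVneq u e) => [->|hue].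
  have -> : c +> f +> f +> e = c +> e +> f +> f by vec.
  rewrite (stB (c := c +> e) (e := vneg e)) ?vaddK ?vnegK //; exact: dirsN.
have Dw := stB hc hp he hf hfe hfn hu hufn hue.
have ha : alpha (D (c +> f +> u)) 1 = 2%N by rewrite Dw.
have h1' : D (c +> f +> u +> vneg f) = 1%N.
  have -> : c +> f +> u +> vneg f = c +> u by vec.
  exact: (stA hc hp he).
have h2' : D (c +> f +> u +> vneg u) = 1%N by rewrite vaddK; exact: (stA hc hp he).
have hfu : vneg f != vneg u by rewrite vnegI eq_sym.
have hfu' : f != vneg u by apply: contra hufn => /eqP ->; rewrite vnegK.
have h1 : D (c +> f +> u +> f) != 1%N.
  exact: (only2 le1r ha (dirsN hf) (dirsN hu) h1' h2' hfu hf hff hfu').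
have := adjR (c +> f +> u) hf; rewrite Dw.
have -> : c +> f +> f +> u = c +> f +> u +> f by vec.
lia.
Qed.

Lemma stF : D (c +> f +> f +> f) = 1%N.
Proof.
have Dv : D (c +> f +> f) = 2%N by apply: (stB hc hp he).
apply: (must2 (a := vneg f)); [exact: le1r|by rewrite Dv|by rewrite vaddK; exact: (stA hc hp he)|].
move=> u hu h1 h2; have := stFp hu h2 h1; lia.
Qed.

Lemma stG : D (c +> f +> f +> f +> f) = 0%N.
Proof.
apply: must1; [exact: le0r|by rewrite stF|] => u hu huf.
case: (eqVneq u (vneg f)) => [->|hun].
  by rewrite vaddK (_ : D (c +> f +> f) = 2%N) //; apply: (stB hc hp he).
have := stFp hu huf hun.
have := adj (c +> f +> f +> f +> u) (dirsN hf).
have -> : c +> f +> f +> f +> u +> vneg f = c +> f +> f +> u by vec.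
lia.
Qed.
End Perp.

Lemma periodic c u : C c -> u \in dirs n -> C (c +> u +> u +> u +> u).
Proof.
move=> /(dd0 HC) hc hu; apply/(dd0 HC).
have : (0 < count (fun w => D w == 0%N) (gridNbrs c))%N by rewrite cntE // hc a00.
rewrite -has_count => /hasP[y /grid_mem[e he ->] /eqP hp].
case: (eqVneq u e) => [->|hue].
  have hp' : D (c +> e +> vneg e) = 0%N by rewrite vaddK.
  have := stD hp hp' (dirsN he); rewrite !vnegK; apply.
case: (eqVneq u (vneg e)) => [->|hun]; first exact: (stE hc hp he).
exact: (stG hc hp he hu hue hun).
Qed.

End Local.

End File3.

Section File4.
Local Open Scope ring_scope.

Definition taur (r : int) : bool * bool :=
  match r with
  | Posz 0 => (false, false)
  | Posz 1 => (true, false)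
  | Posz 2 => (true, true)
  | _ => (false, true)
  end.

Lemma tauE z : tau z = taur (z %% 4)%Z.
Proof. by []. Qed.

Lemma mod4 z : exists2 k : nat, (k < 4)%N & (z %% 4)%Z = Posz k.
Proof.
have h0 : (0 <= (z %% 4)%Z) by apply: modz_ge0.
have h1 : ((z %% 4)%Z < 4) by apply: ltz_pmod.
exists `|(z %% 4)%Z|%N; last by rewrite gez0_abs.
have := h1; rewrite -{1}(gez0_abs h0); lia.
Qed.

Definition par (z : int) : bool := (tau z).1 != (tau z).2.
Definition flipb (p : bool * bool) (b : bool) : bool * bool :=
  if b then (p.1, ~~ p.2) else (~~ p.1, p.2).

Lemma tauS z : tau (z + 1) = flipb (tau z) (par z).
Proof.
rewrite /par !tauE -modzDml; have [k hk ->] := mod4 z.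
by do 4?[case: k hk => [|k] hk //].
Qed.

Lemma tauP z : tau (z - 1) = flipb (tau z) (~~ par z).
Proof.
rewrite /par !tauE -modzDml; have [k hk ->] := mod4 z.
by do 4?[case: k hk => [|k] hk //].
Qed.

Definition taui (p : bool * bool) : int :=
  match p with
  | (false, false) => 0 | (true, false) => 1 | (true, true) => 2 | (false, true) => 3 end.

Lemma tauiK p : tau (taui p) = p.
Proof. by case: p => [[] []]. Qed.

Lemma tau_mod z : taui (tau z) = (z %% 4)%Z.
Proof.
rewrite tauE; have [k hk ->] := mod4 z.
by do 4?[case: k hk => [|k] hk //].
Qed.

Lemma ordj_lt n (k : 'I_n) (b : bool) : (b + k.*2 < n.*2)%N.
Proof. have := ltn_ord k; rewrite -!muln2; case: b => /= h; lia. Qed.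

Definition ordj n (k : 'I_n) (b : bool) : 'I_(n.*2) := Ordinal (ordj_lt k b).

Lemma half_ordj n (k : 'I_n) b : half_ord (ordj k b) = k.
Proof. apply: val_inj; by rewrite /= half_bit_double. Qed.

Lemma odd_ordj n (k : 'I_n) b : odd (ordj k b) = b.
Proof. by case: b; rewrite /= ?oddS odd_double. Qed.

Lemma ordj_half n (j : 'I_(n.*2)) : ordj (half_ord j) (odd j) = j.
Proof. apply: val_inj; by rewrite /= odd_double_half. Qed.

Lemma ordj_inj n (k k' : 'I_n) b b' : ordj k b = ordj k' b' -> k = k' /\ b = b'.
Proof.
move=> h; split; first by rewrite -(half_ordj k b) h half_ordj.
by rewrite -(odd_ordj k b) h odd_ordj.
Qed.

Lemma ordj_eq n (j : 'I_(n.*2)) k b : (j == ordj k b) = (half_ord j == k) && (odd j == b).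
Proof.
apply/eqP/andP => [->|[/eqP <- /eqP <-]]; first by rewrite half_ordj odd_ordj !eqxx.
by rewrite ordj_half.
Qed.

Lemma gray_ordj n (x : {ffun 'I_n -> int}) k b :
  gray x (ordj k b) = if b then (tau (x k)).2 else (tau (x k)).1.
Proof. by rewrite ffunE half_ordj odd_ordj. Qed.

Lemma gray_up n (x : {ffun 'I_n -> int}) k :
  gray (vadd x (unitv k)) = flipAt (gray x) (ordj k (par (x k))).
Proof.
apply/ffunP => j; rewrite !ffunE ordj_eq.
case: (eqVneq (half_ord j) k) => [hk|hk] /=.
  rewrite hk tauS; case: (tau (x k)) (par (x k)) => a b [] /=;
  by case: (odd j).
by rewrite addr0.
Qed.

Lemma gray_down n (x : {ffun 'I_n -> int}) k :
  gray (vadd x (vneg (unitv k))) = flipAt (gray x) (ordj k (~~ par (x k))).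
Proof.
apply/ffunP => j; rewrite !ffunE ordj_eq.
case: (eqVneq (half_ord j) k) => [hk|hk] /=.
  rewrite hk tauP; case: (tau (x k)) (par (x k)) => a b [] /=;
  by case: (odd j).
by rewrite oppr0 addr0.
Qed.

Definition Lidx n (x : {ffun 'I_n -> int}) : seq 'I_(n.*2) :=
  [seq ordj k (par (x k)) | k <- enum 'I_n] ++ [seq ordj k (~~ par (x k)) | k <- enum 'I_n].

Lemma gray_map n (x : {ffun 'I_n -> int}) :
  map (@gray n) (gridNbrs x) = map (flipAt (gray x)) (Lidx x).
Proof.
rewrite gridNbrsE /dirs /Lidx !map_cat -!map_comp; congr (_ ++ _); apply: eq_map => k /=.
  exact: gray_up.
exact: gray_down.
Qed.

Lemma Lidx_perm n (x : {ffun 'I_n -> int}) : perm_eq (Lidx x) (enum 'I_(n.*2)).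
Proof.
apply: uniq_perm; last 1 first.
- move=> j; rewrite mem_enum; apply/idP; rewrite -(ordj_half j) mem_cat.
  case: (eqVneq (odd j) (par (x (half_ord j)))) => [->|hne].
    by apply/orP; left; apply: map_f; rewrite mem_enum.
  apply/orP; right; rewrite (_ : odd j = ~~ par (x (half_ord j))); last first.
    by move: hne; case: (odd j); case: (par _).
  by apply: map_f; rewrite mem_enum.
- rewrite cat_uniq; apply/and3P; split.
  + rewrite map_inj_uniq ?enum_uniq // => k k' /ordj_inj[]; done.
  + apply/hasPn => j /mapP[k _ ->]; apply/mapP => -[k' _] /ordj_inj[<-].
    by case: (par _).
  + rewrite map_inj_uniq ?enum_uniq // => k k' /ordj_inj[]; done.
- exact: enum_uniq.
Qed.

Lemma gray_perm n (x : {ffun 'I_n -> int}) :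
  perm_eq (map (@gray n) (gridNbrs x)) (hamNbrs (gray x)).
Proof. rewrite gray_map /hamNbrs; apply: perm_map; exact: Lidx_perm. Qed.

Lemma gray_count n (x : {ffun 'I_n -> int}) (P : pred {ffun 'I_(n.*2) -> bool}) :
  count P (hamNbrs (gray x)) = count (fun y => P (gray y)) (gridNbrs x).
Proof. by rewrite -(permP (gray_perm x)) count_map. Qed.

Lemma gray_nbr n (x y : {ffun 'I_n -> int}) : y \in gridNbrs x -> gray y \in hamNbrs (gray x).
Proof. by move=> hy; rewrite -(perm_mem (gray_perm x)); apply: map_f. Qed.

Lemma gray_lift n (x : {ffun 'I_n -> int}) q : q \in hamNbrs (gray x) ->
  exists2 y, y \in gridNbrs x & gray y = q.
Proof. by rewrite -(perm_mem (gray_perm x)) => /mapP[y hy ->]; exists y. Qed.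

Lemma gray_surj n (q : {ffun 'I_(n.*2) -> bool}) : exists x : {ffun 'I_n -> int}, gray x = q.
Proof.
exists [ffun k => taui (q (ordj k false), q (ordj k true))].
apply/ffunP => j; rewrite ffunE ffunE tauiK /=.
by rewrite -[in RHS](ordj_half j); case: (odd j).
Qed.

Lemma gray_tau n (x : {ffun 'I_n -> int}) y k : gray x = gray y -> tau (x k) = tau (y k).
Proof.
move=> h; have h1 := gray_ordj x k false; have h2 := gray_ordj x k true.
rewrite h !gray_ordj /= in h1 h2.
by move: h1 h2; case: (tau (x k)) => a b; case: (tau (y k)) => c d /= -> ->.
Qed.

End File4.

Section File5.
Local Open Scope ring_scope.

Definition shiftk n (x : {ffun 'I_n -> int}) (k : 'I_n) (z : int) : {ffun 'I_n -> int} :=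
  [ffun j => x j + (if j == k then z else 0)].

Lemma shiftkD n (x : {ffun 'I_n -> int}) k a b : shiftk (shiftk x k a) k b = shiftk x k (a + b).
Proof. apply/ffunP => j; rewrite !ffunE; case: (j == k); ring. Qed.

Lemma shiftk0 n (x : {ffun 'I_n -> int}) k : shiftk x k 0 = x.
Proof. apply/ffunP => j; rewrite !ffunE; case: (j == k); ring. Qed.

Lemma unitv_dirs n (k : 'I_n) : unitv k \in dirs n.
Proof. by rewrite mem_cat map_f ?mem_enum. Qed.

Section Per.
Variables (n : nat) (C : {ffun 'I_n -> int} -> Prop).
Hypothesis per : forall c u, C c -> u \in dirs n -> C (vadd (vadd (vadd (vadd c u) u) u) u).

Lemma sh4 x k : C x -> C (shiftk x k 4).
Proof.
move=> Cx; have := per Cx (unitv_dirs k).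
congr C; apply/ffunP => j; rewrite !ffunE; case: (j == k) => /=; ring.
Qed.

Lemma sh4n x k : C x -> C (shiftk x k (-4)).
Proof.
move=> Cx; have := per Cx (dirsN (unitv_dirs k)).
congr C; apply/ffunP => j; rewrite !ffunE; case: (j == k) => /=; ring.
Qed.

Lemma shm x k (m : nat) : C x -> C (shiftk x k (4 * m%:Z)) /\ C (shiftk x k (- (4 * m%:Z))).
Proof.
move=> Cx; elim: m => [|m [IH1 IH2]]; first by rewrite mulr0 oppr0 shiftk0.
split.
- have := sh4 k IH1; rewrite shiftkD; congr (C (shiftk _ _ _)); lia.
- have := sh4n k IH2; rewrite shiftkD; congr (C (shiftk _ _ _)); lia.
Qed.

Lemma shz x k t : C x -> C (shiftk x k (4 * t)).
Proof.
move=> Cx; case: t => m; first by case: (shm k m Cx).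
have := (shm k m.+1 Cx).2; congr (C (shiftk _ _ _)); rewrite NegzE; lia.
Qed.

Lemma gray_C x y : gray x = gray y -> C x -> C y.
Proof.
move=> hg Cx.
have ht : forall k, exists t, y k = x k + 4 * t.
  move=> k; have h := gray_tau k hg.
  have hm : (y k %% 4)%Z = (x k %% 4)%Z by rewrite -!tau_mod h.
  have : (4 %| y k - x k)%Z by rewrite -eqz_mod_dvd; apply/eqP.
  move=> /divzK hd; exists ((y k - x k) %/ 4)%Z; rewrite mulrC hd; ring.
pose z (j : nat) : {ffun 'I_n -> int} := [ffun k : 'I_n => if (k < j)%N then y k else x k].
have hz : forall j, (j <= n)%N -> C (z j).
  elim => [|j IH] hj.
    by congr C: Cx; apply/ffunP => k; rewrite ffunE.
  have hjn : (j < n)%N by [].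
  pose kj : 'I_n := Ordinal hjn.
  have [t ht'] := ht kj.
  have := shz kj t (IH (ltnW hj)); congr C; apply/ffunP => k; rewrite !ffunE.
  case: (ltngtP k j) => hk.
  - have neq : (k == kj) = false.
      by apply/eqP => e; move: hk; rewrite e /= ltnn.
    by rewrite neq addr0 ltnS (ltnW hk).
  - have neq : (k == kj) = false.
      by apply/eqP => e; move: hk; rewrite e /= ltnn.
    by rewrite neq addr0 ltnS leqNgt hk.
  - have hk' : k = kj by apply: val_inj.
    by rewrite hk ltnSn -hk' eqxx; rewrite hk' ht'.
by congr C: (hz n (leqnn n)); apply/ffunP => k; rewrite ffunE ltn_ord.
Qed.
End Per.

Section Cover.
Variables (n : nat) (C : {ffun 'I_n -> int} -> Prop).
Hypothesis Cg : forall x y, gray x = gray y -> C x -> C y.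

Definition DD (q : {ffun 'I_(n.*2) -> bool}) : Prop := exists y, gray y = q /\ C y.

Lemma DDg x : DD (gray x) <-> C x.
Proof. split; [move=> [y [hy Cy]]; exact: Cg hy Cy | by move=> Cx; exists x]. Qed.

Lemma walk_proj k (v c : {ffun 'I_n -> int}) :
  walk (@gridNbrs n) k v c -> walk (@hamNbrs n.*2) k (gray v) (gray c).
Proof.
elim: k v => [|k IH] v /=; first by move=> ->.
by move=> [z hz wz]; exists (gray z); [exact: gray_nbr | exact: IH].
Qed.

Lemma walk_lift k (v : {ffun 'I_n -> int}) q :
  walk (@hamNbrs n.*2) k (gray v) q -> exists y, gray y = q /\ walk (@gridNbrs n) k v y.
Proof.
elim: k v => [|k IH] v /=; first by move=> <-; exists v.
move=> [z hz wz]; have [y' hy' gy'] := gray_lift hz.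
rewrite -gy' in wz; have [y [gy wy]] := IH y' wz.
by exists y; split => //; exists y'.
Qed.

Lemma distEq v i : distC (@hamNbrs n.*2) DD (gray v) i <-> distC (@gridNbrs n) C v i.
Proof.
split.
- move=> [[q [Dq wq]] mn]; have [y [gy wy]] := walk_lift wq.
  split; first by exists y; split => //; apply/DDg; rewrite gy.
  move=> j hj c Cc wc; apply: (mn j hj (gray c)); [exact/DDg | exact: walk_proj].
- move=> [[c [Cc wc]] mn]; split.
    by exists (gray c); split; [exact/DDg | exact: walk_proj].
  move=> j hj q Dq wq; have [y [gy wy]] := walk_lift wq.
  apply: (mn j hj y) => //; apply/DDg; rewrite gy //.
Qed.

Lemma cover_CRC rho alpha : isCRC (@gridNbrs n) C rho alpha -> isCRC (@hamNbrs n.*2) DD rho alpha.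
Proof.
move=> [[cov [v0 hv0]] Hn H0]; split => //.
- split.
    move=> q; have [x <-] := gray_surj q; have [i hi di] := cov x.
    by exists i => //; apply/distEq.
  by exists (gray v0); apply/distEq.
- move=> i j q hi hj; have [x <-] := gray_surj q => /distEq dx.
  rewrite /nbrsIn gray_count -(Hn i j x hi hj dx) /nbrsIn.
  apply: eq_count => y /=; by rewrite (propext (distEq y j)).
Qed.
End Cover.


End File5.

Theorem mainTheorem10 (n : nat) (C : {ffun 'I_n -> int} -> Prop) (rho : nat)
    (alpha : nat -> nat -> nat) :
  (1 <= n)%N -> (2 <= rho)%N ->
  isCRC (@gridNbrs n) C rho alpha ->
  allOnes rho alpha -> alpha 1%N 0%N = 1%N -> alpha 2%N 1%N = 2%N ->
  exists D : {ffun 'I_(n.*2) -> bool} -> Prop,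
    isCRC (@hamNbrs (n.*2)) D rho alpha /\ (forall x, C x <-> D (gray x)).
Proof.
move=> _ hrho HC hao a10 a21.
have a00 : alpha 0%N 0%N = 1%N by apply: hao.
have a11 : alpha 1%N 1%N = 1%N by apply: hao; exact: leq_trans hrho.
have per : forall c u, C c -> u \in dirs n -> C (vadd (vadd (vadd (vadd c u) u) u) u).
  move=> c u; have := @periodic n C rho alpha HC hrho a00 a10 a11 a21 c u.
  by [].
have Cg : forall x y, gray x = gray y -> C x -> C y.
  move=> x y; exact: (@gray_C n C per x y).
exists (DD C); split; first exact: cover_CRC.
by move=> x; rewrite DDg.
Qed.
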